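(* Let $\sigma:\mathbb{R}\to\mathbb{R}$ be an increasing odd homeomorphism such that either $\sigma(x)=x$ for all $x$ in a neighborhood of $0$, or $\sigma(x)=x$ for all $x\in\mathbb{Z}$. Let $h(x,y)=(x+y,y)$, $v(x,y)=(x,x+y)$, so that $\Gamma(\mathrm{Id})=\langle h,v\rangle=\mathrm{SL}(2,\mathbb{Z})$. Then: (1) there is a surjective group morphism $\pi:\Gamma(\sigma)\to\Gamma(\mathrm{Id})$ with $\pi(w(h_\sigma,v_\sigma))=w(h,v)$ for every word $w$ in the free group on two letters; (2) the kernel of $\pi$ is the normal subgroup of $\Gamma(\sigma)$ generated by $V_\sigma^2U_\sigma^3$ and $V_\sigma^4$, where $U_\sigma=v_\sigma^{-1}h_\sigma$ and $V_\sigma=h_\sigma^{-1}v_\sigma h_\sigma^{-1}$.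
   Context: $h_\sigma(x,y)=(x+\sigma^{-1}(y),y)$, $v_\sigma(x,y)=(x,\sigma(x)+y)$, and $\Gamma(\sigma)$ is the group generated by $h_\sigma,v_\sigma$ under composition. For a word $w$ in the free group $\mathbb F(a,b)$ and elements $x,y$ of a group, $w(x,y)$ denotes the image of $w$ under the morphism $a\mapsto x$, $b\mapsto y$. *)

(* Defs.v *)
From Stdlib Require Import Reals List.
Import ListNotations.
Open Scope R_scope.

(* Letters of the free group F(a,b): a generator together with a flag
   [true] meaning "inverse". Words are lists of letters; every element of
   the free group is represented by such a word. *)
Inductive gen := Ga | Gb.
Definition letter := (gen * bool)%type.
Definition word := list letter.

Definition winv (w : word) : word :=
  rev (map (fun l => (fst l, negb (snd l))) w).

Definition pt := (R * R)%type.

(* h_sigma, v_sigma and their inverses; [si] is sigma^{-1}. *)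
Definition h_s (s si : R -> R) (p : pt) : pt := (fst p + si (snd p), snd p).
Definition h_s_inv (s si : R -> R) (p : pt) : pt := (fst p - si (snd p), snd p).
Definition v_s (s si : R -> R) (p : pt) : pt := (fst p, s (fst p) + snd p).
Definition v_s_inv (s si : R -> R) (p : pt) : pt := (fst p, snd p - s (fst p)).

Definition letter_map (s si : R -> R) (l : letter) : pt -> pt :=
  match l with
  | (Ga, false) => h_s s si
  | (Ga, true) => h_s_inv s si
  | (Gb, false) => v_s s si
  | (Gb, true) => v_s_inv s si
  end.

(* w(h_sigma, v_sigma): the group law of Gamma(sigma) is composition,
   so [l1; ...; ln] evaluates to l1 o ... o ln. *)
Fixpoint eval_word (s si : R -> R) (w : word) : pt -> pt :=
  match w with
  | [] => fun p => p
  | l :: w' => fun p => letter_map s si l (eval_word s si w' p)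
  end.

Definition Gamma (s si : R -> R) (f : pt -> pt) : Prop :=
  exists w : word, f = eval_word s si w.

(* U_sigma = v^-1 h,  V_sigma = h^-1 v h^-1 (as words in a = h, b = v). *)
Definition U_w : word := [(Gb, true); (Ga, false)].
Definition V_w : word := [(Ga, true); (Gb, false); (Ga, true)].
Definition rel1 : word := V_w ++ V_w ++ U_w ++ U_w ++ U_w.
Definition rel2 : word := V_w ++ V_w ++ V_w ++ V_w.

(* Words representing elements of the normal closure of {rel1, rel2}:
   finite products of conjugates u r^{+-1} u^{-1}. *)
Inductive NCword : word -> Prop :=
  | NC_nil : NCword []
  | NC_cons (u r w : word) :
      (r = rel1 \/ r = winv rel1 \/ r = rel2 \/ r = winv rel2) ->
      NCword w -> NCword (u ++ r ++ winv u ++ w).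

Definition NormalClosure (s si : R -> R) (f : pt -> pt) : Prop :=
  exists w : word, NCword w /\ f = eval_word s si w.

Definition Rid (x : R) : R := x.

(* Main.v *)
Require Import Defs.
From Stdlib Require Import Reals List Lra Psatz ClassicalEpsilon FunctionalExtensionality.
Import ListNotations.
Open Scope R_scope.

Lemma E_app s si w1 w2 p : eval_word s si (w1 ++ w2) p = eval_word s si w1 (eval_word s si w2 p).
Proof. induction w1 as [|l w1 IH]; simpl; [reflexivity| now rewrite IH]. Qed.

Definition linv (l1 l2 : letter) : bool :=
  match l1, l2 with (g1,b1),(g2,b2) =>
    (match g1,g2 with Ga,Ga | Gb,Gb => true | _,_ => false end) && xorb b1 b2 end.

Lemma letter_cancel s si l1 l2 q : linv l1 l2 = true ->
  letter_map s si l1 (letter_map s si l2 q) = q.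
Proof.
  destruct q as [x y]; destruct l1 as [[] []], l2 as [[] []]; simpl; intro H;
  try discriminate; unfold h_s, h_s_inv, v_s, v_s_inv; simpl; f_equal; ring.
Qed.

Lemma E_cons s si l w p : eval_word s si (l :: w) p = letter_map s si l (eval_word s si w p).
Proof. reflexivity. Qed.
Lemma E_nil s si p : eval_word s si [] p = p.
Proof. reflexivity. Qed.

Lemma linv_neg l : linv (fst l, negb (snd l)) l = true /\ linv l (fst l, negb (snd l)) = true.
Proof. destruct l as [[] []]; simpl; auto. Qed.

Lemma winv_cons l w : winv (l :: w) = winv w ++ [(fst l, negb (snd l))].
Proof. unfold winv; simpl; reflexivity. Qed.

Lemma winv_app a b : winv (a ++ b) = winv b ++ winv a.
Proof. unfold winv; now rewrite map_app, rev_app_distr. Qed.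

Lemma winv_inv w : winv (winv w) = w.
Proof.
  unfold winv; rewrite map_rev, rev_involutive, map_map.
  induction w as [|[g b] w IH]; simpl; [reflexivity|]; rewrite Bool.negb_involutive; now f_equal.
Qed.

Lemma E_winv_l s si w p : eval_word s si (winv w) (eval_word s si w p) = p.
Proof.
  induction w as [|l w IH]; [reflexivity|].
  rewrite winv_cons, E_app, E_cons, E_nil, E_cons, letter_cancel by apply linv_neg. exact IH.
Qed.

Lemma E_winv_r s si w p : eval_word s si w (eval_word s si (winv w) p) = p.
Proof.
  revert p; induction w as [|l w IH]; intro p; [reflexivity|].
  rewrite winv_cons, E_app, E_cons, IH, E_cons, E_nil. apply letter_cancel, linv_neg.
Qed.

Definition rstep (l : letter) (acc : word) : word :=
  match acc with
  | l' :: acc' => if linv l l' then acc' else l :: acc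
  | [] => [l]
  end.
Definition reduce (w : word) : word := fold_right rstep [] w.

Lemma reduce_ok s si w p : eval_word s si (reduce w) p = eval_word s si w p.
Proof.
  induction w as [|l w IH]; [reflexivity|]. simpl. rewrite <- IH.
  destruct (reduce w) as [|l' r]; [reflexivity|].
  simpl. destruct (linv l l') eqn:H; [|reflexivity].
  simpl. now rewrite letter_cancel.
Qed.

Lemma red_eq s si w1 w2 : reduce w1 = reduce w2 -> forall p, eval_word s si w1 p = eval_word s si w2 p.
Proof. intros H p. rewrite <- (reduce_ok s si w1), <- (reduce_ok s si w2), H. reflexivity. Qed.

Lemma NC_app w1 w2 : NCword w1 -> NCword w2 -> NCword (w1 ++ w2).
Proof.
  induction 1 as [|u r w Hr Hw IH]; intro H2; simpl; [exact H2|].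
  rewrite <- !app_assoc. constructor; auto.
Qed.

Lemma NC_conj s si w : NCword w -> forall v, exists w', NCword w' /\
  forall p, eval_word s si v (eval_word s si w (eval_word s si (winv v) p)) = eval_word s si w' p.
Proof.
  induction 1 as [|u r w Hr Hw IH]; intro v.
  - exists []. split; [constructor|]. intro p; simpl. apply E_winv_r.
  - destruct (IH v) as [w' [Hw' Hp]].
    exists ((v ++ u) ++ r ++ winv (v ++ u) ++ w'). split; [constructor; auto|].
    intro p. rewrite !E_app. rewrite <- Hp. rewrite winv_app, !E_app.
    rewrite E_winv_l. reflexivity.
Qed.

Definition eqv s si (w w' : word) : Prop :=
  exists k, NCword k /\ forall p, eval_word s si w p = eval_word s si (k ++ w') p.

Lemma eqv_of_eq s si w w' : (forall p, eval_word s si w p = eval_word s si w' p) -> eqv s si w w'.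
Proof. intro H; exists []; split; [constructor|exact H]. Qed.

Lemma eqv_lit s si w w' : w = w' -> eqv s si w w'.
Proof. intros ->; apply eqv_of_eq; reflexivity. Qed.

Lemma eqv_trans s si a b c : eqv s si a b -> eqv s si b c -> eqv s si a c.
Proof.
  intros [k1 [H1 E1]] [k2 [H2 E2]]. exists (k1 ++ k2); split; [now apply NC_app|].
  intro p. rewrite E1, !E_app, E2, E_app. reflexivity.
Qed.

Lemma eqv_appr s si w w' x : eqv s si w w' -> eqv s si (w ++ x) (w' ++ x).
Proof.
  intros [k [H1 E1]]. exists k; split; auto. intro p. rewrite !E_app, E1, !E_app. reflexivity.
Qed.

Lemma eqv_appl s si c w w' : eqv s si w w' -> eqv s si (c ++ w) (c ++ w').
Proof.
  intros [k [H1 E1]]. destruct (NC_conj s si k H1 c) as [k' [Hk' Ek']].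
  exists k'; split; auto. intro p. rewrite !E_app, E1, E_app, <- Ek', E_winv_l. reflexivity.
Qed.

Lemma eqv_red s si k w w' : NCword k -> reduce w = reduce (k ++ w') -> eqv s si w w'.
Proof. intros Hk Hr. exists k; split; auto. now apply red_eq. Qed.

Definition VV := V_w ++ V_w.

Lemma NC1 u r w : (r = rel1 \/ r = winv rel1 \/ r = rel2 \/ r = winv rel2) ->
  NCword w -> NCword (u ++ r ++ winv u ++ w).
Proof. intros; constructor; auto. Qed.

Ltac ncw := repeat (apply NC1; [tauto|]); apply NC_nil.

Lemma R_zz s si x : eqv s si (VV ++ VV ++ x) x.
Proof. apply (eqv_red s si ([] ++ rel2 ++ winv [] ++ [])); [ncw|]. reflexivity. Qed.

Lemma R_uz s si : eqv s si (U_w ++ VV) (VV ++ U_w).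
Proof.
  apply (eqv_red s si (U_w ++ rel1 ++ winv U_w ++ ([] ++ winv rel1 ++ winv [] ++ []))); [ncw|].
  vm_compute. reflexivity.
Qed.

Lemma R_uuu s si : eqv s si (U_w ++ U_w ++ U_w) VV.
Proof.
  apply (eqv_red s si (winv VV ++ rel1 ++ winv (winv VV) ++ ([] ++ winv rel2 ++ winv [] ++ []))); [ncw|].
  vm_compute. reflexivity.
Qed.

Lemma R_vinv s si : eqv s si (winv V_w) (V_w ++ V_w ++ V_w).
Proof.
  apply (eqv_red s si ([] ++ winv rel2 ++ winv [] ++ [])); [ncw|].
  vm_compute. reflexivity.
Qed.

Lemma R_uinv s si : eqv s si (winv U_w) (U_w ++ U_w ++ U_w ++ U_w ++ U_w).
Proof.
  apply (eqv_red s si ([] ++ winv rel1 ++ winv [] ++ (VV ++ winv rel1 ++ winv VV ++ ([] ++ rel2 ++ winv [] ++ []))));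
    [ncw|].
  vm_compute. reflexivity.
Qed.

Inductive tok := TV | TU | TU2.
Definition tokw (t : tok) : word :=
  match t with TV => V_w | TU => U_w | TU2 => U_w ++ U_w end.
Definition tw (l : list tok) : word := concat (map tokw l).
Definition nf (e : bool) (l : list tok) : word := (if e then VV else []) ++ tw l.
Definition isU t := match t with TV => false | _ => true end.
Fixpoint altb (l : list tok) : bool :=
  match l with
  | t1 :: ((t2 :: _) as l') => xorb (isU t1) (isU t2) && altb l'
  | _ => true
  end.

Lemma tw_cons t l : tw (t :: l) = tokw t ++ tw l.
Proof. reflexivity. Qed.

Lemma altb_tail t l : altb (t :: l) = true -> altb l = true.
Proof. destruct l; simpl; auto. intro H; apply andb_prop in H; tauto. Qed.

Lemma zz s si e l : eqv s si (VV ++ nf e l) (nf (negb e) l).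
Proof.
  destruct e; unfold nf; simpl.
  - try rewrite <- app_assoc. apply R_zz.
  - apply eqv_lit; reflexivity.
Qed.

Lemma step_u_tw s si l : altb l = true -> exists e' l', altb l' = true /\ eqv s si (U_w ++ tw l) (nf e' l').
Proof.
  intro H. destruct l as [|t l].
  - exists false, [TU]. split; [reflexivity|]. apply eqv_lit. reflexivity.
  - destruct t.
    + exists false, (TU :: TV :: l). split; [exact H|]. apply eqv_lit; reflexivity.
    + exists false, (TU2 :: l). split; [exact H|]. apply eqv_lit. unfold nf, tw, U_w; simpl; reflexivity.
    + exists true, l. split; [eapply altb_tail; eauto|].
      rewrite tw_cons. change (tokw TU2) with (U_w ++ U_w). replace (U_w ++ (U_w ++ U_w) ++ tw l) with ((U_w ++ U_w ++ U_w) ++ tw l) by (rewrite !app_assoc; reflexivity).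
      unfold nf. apply eqv_appr, R_uuu.
Qed.

Lemma step_v_tw s si l : altb l = true -> exists e' l', altb l' = true /\ eqv s si (V_w ++ tw l) (nf e' l').
Proof.
  intro H. destruct l as [|t l].
  - exists false, [TV]. split; [reflexivity|]. apply eqv_lit. reflexivity.
  - destruct t.
    + exists true, l. split; [eapply altb_tail; eauto|]. apply eqv_lit. unfold nf, tw, VV, V_w; simpl; reflexivity.
    + exists false, (TV :: TU :: l). split; [exact H|]. apply eqv_lit; reflexivity.
    + exists false, (TV :: TU2 :: l). split; [exact H|]. apply eqv_lit; reflexivity.
Qed.

Lemma step_u s si e l : altb l = true -> exists e' l', altb l' = true /\ eqv s si (U_w ++ nf e l) (nf e' l').
Proof.
  intro H. destruct e.
  - destruct (step_u_tw s si l H) as [e1 [l1 [H1 E1]]].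
    exists (negb e1), l1. split; auto. unfold nf at 1.
    rewrite app_assoc. eapply eqv_trans; [apply eqv_appr, R_uz|].
    rewrite <- app_assoc. eapply eqv_trans; [apply eqv_appl, E1|]. apply zz.
  - apply step_u_tw; auto.
Qed.

Lemma step_v s si e l : altb l = true -> exists e' l', altb l' = true /\ eqv s si (V_w ++ nf e l) (nf e' l').
Proof.
  intro H. destruct e.
  - destruct (step_v_tw s si l H) as [e1 [l1 [H1 E1]]].
    exists (negb e1), l1. split; auto. unfold nf at 1.
    replace (V_w ++ VV ++ tw l) with (VV ++ (V_w ++ tw l)) by reflexivity.
    eapply eqv_trans; [apply eqv_appl, E1|]. apply zz.
  - apply step_v_tw; auto.
Qed.

Inductive pg := PU | PV.
Definition gw g := match g with PU => U_w | PV => V_w end.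

Lemma step_gs s si gs : forall e l, altb l = true -> exists e' l', altb l' = true /\
  eqv s si (concat (map gw gs) ++ nf e l) (nf e' l').
Proof.
  induction gs as [|g gs IH]; intros e l H.
  - exists e, l; split; auto. apply eqv_lit; reflexivity.
  - destruct (IH e l H) as [e1 [l1 [H1 E1]]].
    simpl. rewrite <- app_assoc.
    assert (exists e' l', altb l' = true /\ eqv s si (gw g ++ nf e1 l1) (nf e' l')) as [e2 [l2 [H2 E2]]]
      by (destruct g; [apply step_u|apply step_v]; auto).
    exists e2, l2; split; auto.
    eapply eqv_trans; [apply eqv_appl, E1|exact E2].
Qed.

Lemma letter_gs s si l : exists gs, eqv s si [l] (concat (map gw gs)).
Proof.
  destruct l as [[] []].
  - (* a^-1 = U V *)
    exists [PU; PV]. apply (eqv_red s si []); [ncw|]. vm_compute; reflexivity.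
  - (* a = V^-1 U^-1 *)
    exists [PV;PV;PV;PU;PU;PU;PU;PU].
    eapply eqv_trans; [apply (eqv_red s si [] _ (winv V_w ++ winv U_w)); [ncw|vm_compute; reflexivity]|].
    eapply eqv_trans; [apply eqv_appr, R_vinv|].
    replace ((V_w ++ V_w ++ V_w) ++ winv U_w) with ((V_w ++ V_w ++ V_w) ++ winv U_w) by reflexivity.
    eapply eqv_trans; [apply eqv_appl, R_uinv|].
    apply eqv_lit; reflexivity.
  - exists [PU; PU; PV]. apply (eqv_red s si []); [ncw|]. vm_compute; reflexivity.
  - exists [PV;PV;PV;PU;PU;PU;PU;PU;PU;PU;PU;PU;PU].
    eapply eqv_trans; [apply (eqv_red s si [] _ (winv V_w ++ winv U_w ++ winv U_w)); [ncw|vm_compute; reflexivity]|].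
    eapply eqv_trans; [apply eqv_appr, R_vinv|].
    eapply eqv_trans; [apply eqv_appl, eqv_appr, R_uinv|].
    eapply eqv_trans; [apply eqv_appl, eqv_appl, R_uinv|].
    apply eqv_lit; reflexivity.
Qed.

Lemma stepA s si w : exists e l, altb l = true /\ eqv s si w (nf e l).
Proof.
  induction w as [|x w [e [l [H E1]]]].
  - exists false, []. split; auto. apply eqv_lit; reflexivity.
  - destruct (letter_gs s si x) as [gs Eg].
    destruct (step_gs s si gs e l H) as [e' [l' [H' E']]].
    exists e', l'. split; auto.
    change (x :: w) with ([x] ++ w).
    eapply eqv_trans; [apply eqv_appl, E1|].
    eapply eqv_trans; [apply eqv_appr, Eg|exact E'].
Qed.

Definition Ei := eval_word Rid Rid.

Definition tokf (t : tok) (p : pt) : pt :=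
  match t with
  | TV => (- snd p, fst p)
  | TU => (fst p + snd p, - fst p)
  | TU2 => (snd p, - fst p - snd p)
  end.

Lemma Ei_tok t p : Ei (tokw t) p = tokf t p.
Proof.
  destruct p as [x y]; destruct t; unfold Ei, tokw, U_w, V_w; simpl; unfold h_s, h_s_inv, v_s, v_s_inv, Rid; simpl; f_equal; ring.
Qed.

Fixpoint twf (l : list tok) (p : pt) : pt :=
  match l with [] => p | t :: l' => tokf t (twf l' p) end.

Lemma Ei_tw l p : Ei (tw l) p = twf l p.
Proof.
  induction l as [|t l IH]; [reflexivity|].
  rewrite tw_cons. unfold Ei in *. rewrite E_app, IH. apply Ei_tok.
Qed.

Lemma Ei_VV p : Ei VV p = (- fst p, - snd p).
Proof.
  destruct p as [x y]; unfold Ei, VV, U_w, V_w; simpl; unfold h_s, h_s_inv, v_s, v_s_inv, Rid; simpl; f_equal; ring.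
Qed.

Definition Xr (p : pt) := fst p * snd p < 0.
Definition Yr (p : pt) := fst p * snd p > 0.
Definition nrm (p : pt) := Rabs (fst p) + Rabs (snd p).
Definition startr t := match t with TV => Xr | _ => Yr end.
Definition outr t := match t with TV => Yr | _ => Xr end.
Fixpoint lastT (d : tok) (l : list tok) : tok := match l with [] => d | t :: l' => lastT t l' end.
Definition hasU l := existsb isU l.

Ltac rabs := repeat match goal with |- context [Rabs ?a] =>
  let H := fresh in destruct (Rle_or_lt 0 a) as [H|H];
  [rewrite (Rabs_pos_eq a H) | rewrite (Rabs_left a H)] end.

Lemma tok_prop t p : startr t p -> outr t (tokf t p) /\ nrm (tokf t p) >= nrm p /\ (isU t = true -> nrm (tokf t p) > nrm p).
Proof.
  destruct p as [x y]; unfold startr, outr, Xr, Yr, nrm; destruct t; simpl; intro H.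
  - split; [nra|]. split; [|intro Hc; simpl in Hc; discriminate Hc]. rabs; lra.
  - assert (Hs : (x > 0 /\ y > 0) \/ (x < 0 /\ y < 0)).
    { destruct (Rlt_or_le 0 x); destruct (Rlt_or_le 0 y); [left; lra|right|right|right]; nra. }
    split; [nra|]. destruct Hs as [[? ?]|[? ?]]; split; try intros _; rabs; lra.
  - assert (Hs : (x > 0 /\ y > 0) \/ (x < 0 /\ y < 0)).
    { destruct (Rlt_or_le 0 x); destruct (Rlt_or_le 0 y); [left; lra|right|right|right]; nra. }
    split; [nra|]. destruct Hs as [[? ?]|[? ?]]; split; try intros _; rabs; lra.
Qed.

Lemma pingpong l : forall t p, altb (t :: l) = true -> startr (lastT t l) p ->
  outr t (twf (t :: l) p) /\ nrm (twf (t :: l) p) >= nrm p /\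
  (hasU (t :: l) = true -> nrm (twf (t :: l) p) > nrm p).
Proof.
  induction l as [|t' l IH]; intros t p Ha Hs.
  - simpl in *. destruct (tok_prop t p Hs) as [A1 [A2 A3]]. split; auto. split; auto.
    rewrite Bool.orb_false_r. exact A3.
  - simpl in Ha. apply andb_prop in Ha as [Hx Ha].
    destruct (IH t' p Ha Hs) as [B1 [B2 B3]].
    change (twf (t :: t' :: l) p) with (tokf t (twf (t' :: l) p)).
    set (q := twf (t' :: l) p) in *.
    assert (Hst : startr t q) by (destruct t, t'; simpl in *; try discriminate; auto).
    destruct (tok_prop t q Hst) as [A1 [A2 A3]].
    split; auto. split; [lra|].
    intro HU. destruct t; simpl in HU.
    + destruct t'; simpl in Hx; try discriminate; assert (nrm q > nrm p) by (apply B3; reflexivity); lra.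
    + assert (nrm (tokf TU q) > nrm q) by (apply A3; reflexivity). lra.
    + assert (nrm (tokf TU2 q) > nrm q) by (apply A3; reflexivity). lra.
Qed.

Lemma Ei_nf e l p : Ei (nf e l) p = if e then (- fst (twf l p), - snd (twf l p)) else twf l p.
Proof.
  unfold nf. destruct e.
  - unfold Ei. rewrite E_app. fold Ei. rewrite Ei_VV, Ei_tw. reflexivity.
  - apply Ei_tw.
Qed.

Lemma nrm_neg q : nrm (- fst q, - snd q) = nrm q.
Proof. unfold nrm; simpl; rewrite !Rabs_Ropp; reflexivity. Qed.

Lemma stepB e l : altb l = true -> (forall p, Ei (nf e l) p = p) -> e = false /\ l = [].
Proof.
  intros Ha H. destruct l as [|t l].
  - destruct e; [|auto]. specialize (H (1,0)). rewrite Ei_nf in H. simpl in H.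
    injection H; intros; lra.
  - exfalso.
    set (p := if isU (lastT t l) then ((1,1) : pt) else (1,-1)).
    assert (Hs : startr (lastT t l) p) by (unfold p; destruct (lastT t l); unfold startr, Xr, Yr; simpl; lra).
    destruct (pingpong l t p Ha Hs) as [_ [B2 B3]].
    assert (Hn : nrm (twf (t :: l) p) = nrm p).
    { specialize (H p). rewrite Ei_nf in H. destruct e; rewrite <- H at 2; [now rewrite nrm_neg|reflexivity]. }
    destruct (hasU (t :: l)) eqn:HU; [specialize (B3 eq_refl); lra|].
    destruct t; simpl in HU; try discriminate.
    destruct l as [|t' l]; [|destruct t'; simpl in Ha; discriminate].
    specialize (H p). rewrite Ei_nf in H. unfold p in H; simpl in H.
    destruct e; injection H; intros; lra.
Qed.

Lemma Ei_lin w : exists a b c d, forall p, Ei w p = (a * fst p + b * snd p, c * fst p + d * snd p).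
Proof.
  induction w as [|l w [a [b [c [d IH]]]]].
  - exists 1, 0, 0, 1. intros [x y]; unfold Ei; simpl; f_equal; ring.
  - unfold Ei in *. destruct l as [[] []].
    + exists (a - c), (b - d), c, d. intro p. rewrite E_cons, IH. unfold letter_map, h_s_inv, Rid; simpl; f_equal; ring.
    + exists (a + c), (b + d), c, d. intro p. rewrite E_cons, IH. unfold letter_map, h_s, Rid; simpl; f_equal; ring.
    + exists a, b, (c - a), (d - b). intro p. rewrite E_cons, IH. unfold letter_map, v_s_inv, Rid; simpl; f_equal; ring.
    + exists a, b, (c + a), (d + b). intro p. rewrite E_cons, IH. unfold letter_map, v_s, Rid; simpl; f_equal; ring.
Qed.

Lemma lin_agree w1 w2 c : c <> 0 -> Ei w1 (c, 0) = Ei w2 (c, 0) -> Ei w1 (0, c) = Ei w2 (0, c) ->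
  forall p, Ei w1 p = Ei w2 p.
Proof.
  intros Hc H1 H2 p.
  destruct (Ei_lin w1) as [a [b [c1 [d E1]]]]; destruct (Ei_lin w2) as [a' [b' [c1' [d' E2]]]].
  rewrite E1, E2 in *. simpl in *. injection H1; injection H2; intros.
  assert (a = a') by (apply Rmult_eq_reg_r with c; [lra|auto]).
  assert (b = b') by (apply Rmult_eq_reg_r with c; [lra|auto]).
  assert (c1 = c1') by (apply Rmult_eq_reg_r with c; [lra|auto]).
  assert (d = d') by (apply Rmult_eq_reg_r with c; [lra|auto]).
  subst. reflexivity.
Qed.

Lemma rabs_bnd a b m : Rabs a <= m -> Rabs b <= m ->
  Rabs (a + b) <= 2 * m /\ Rabs (a - b) <= 2 * m /\ Rabs a <= 2 * m /\ Rabs b <= 2 * m.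
Proof. intros. rabs; repeat split; try lra; revert H H0; rabs; lra. Qed.

Lemma int_agree s si (sz : forall z : Z, s (IZR z) = IZR z) (si_s : forall x, si (s x) = x) w :
  forall m n, eval_word s si w (IZR m, IZR n) = Ei w (IZR m, IZR n) /\
    exists m' n', Ei w (IZR m, IZR n) = (IZR m', IZR n').
Proof.
  assert (siz : forall z, si (IZR z) = IZR z) by (intro z; rewrite <- (sz z) at 1; apply si_s).
  intros m n. induction w as [|l w [IHe [m' [n' IHi]]]].
  - split; [reflexivity|]. exists m, n; reflexivity.
  - unfold Ei in *. rewrite !E_cons, IHe, IHi.
    destruct l as [[] []]; unfold letter_map, h_s, h_s_inv, v_s, v_s_inv, Rid; simpl;
      rewrite ?sz, ?siz; split; try reflexivity.
    + exists (m' - n')%Z, n'. now rewrite minus_IZR.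
    + exists (m' + n')%Z, n'. now rewrite plus_IZR.
    + exists m', (n' - m')%Z. now rewrite minus_IZR.
    + exists m', (m' + n')%Z. now rewrite plus_IZR.
Qed.

Lemma small_agree s si e (se : forall x, Rabs x < e -> s x = x) (si_s : forall x, si (s x) = x) w :
  forall c p, 0 <= c -> Rabs (fst p) <= c -> Rabs (snd p) <= c -> c * 2 ^ length w < e ->
  eval_word s si w p = Ei w p /\ Rabs (fst (Ei w p)) <= c * 2 ^ length w /\ Rabs (snd (Ei w p)) <= c * 2 ^ length w.
Proof.
  assert (sie : forall y, Rabs y < e -> si y = y) by (intros y Hy; rewrite <- (se y Hy) at 1; apply si_s).
  intros c p Hc H1 H2. induction w as [|l w IH]; intro Hl.
  - unfold Ei; simpl in *. split; [reflexivity|]. split; lra.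
  - simpl length in *. change (2 ^ S (length w)) with (2 * 2 ^ length w) in *.
    assert (Hp : 0 < 2 ^ length w) by (apply pow_lt; lra).
    assert (Hm : 0 <= c * 2 ^ length w) by (apply Rmult_le_pos; lra).
    destruct IH as [IHe [B1 B2]]; [nra|].
    set (m := c * 2 ^ length w) in *.
    replace (c * (2 * 2 ^ length w)) with (2 * m) in * by (unfold m; ring).
    unfold Ei in *. rewrite !E_cons, IHe. destruct (eval_word Rid Rid w p) as [x y]; simpl in B1, B2.

    destruct (rabs_bnd x y m B1 B2) as [C1 [C2 [C3 C4]]].
    destruct l as [[] []]; unfold letter_map, h_s, h_s_inv, v_s, v_s_inv, Rid; simpl;
      rewrite ?(se x), ?(sie y) by lra; repeat split; try lra; try (rewrite Rplus_comm; lra); try (rewrite Rabs_minus_sym; lra).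
Qed.

Lemma wd s si (si_s : forall x, si (s x) = x)
  (s_fix : (exists e, 0 < e /\ forall x, Rabs x < e -> s x = x)
           \/ (forall z : Z, s (IZR z) = IZR z)) w1 w2 :
  (forall p, eval_word s si w1 p = eval_word s si w2 p) -> forall p, Ei w1 p = Ei w2 p.
Proof.
  intro H. destruct s_fix as [[e [He se]] | sz].
  - set (N := (length w1 + length w2)%nat).
    set (c := e / (2 * 2 ^ N)).
    assert (HN : 0 < 2 ^ N) by (apply pow_lt; lra).
    assert (Hc : 0 < c) by (unfold c; apply Rdiv_lt_0_compat; lra).
    assert (HcN : c * 2 ^ N = e / 2) by (unfold c; field; lra).
    assert (Hb : forall w : word, (length w <= N)%nat -> c * 2 ^ length w < e).
    { intros w Hw. assert (2 ^ length w <= 2 ^ N) by (apply Rle_pow; [lra|exact Hw]). nra. }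
    assert (Hw1 : c * 2 ^ length w1 < e) by (apply Hb; unfold N; lia).
    assert (Hw2 : c * 2 ^ length w2 < e) by (apply Hb; unfold N; lia).
    apply (lin_agree w1 w2 c); [lra| |].
    + destruct (small_agree s si e se si_s w1 c (c,0)) as [E1 _]; simpl; rewrite ?Rabs_R0, ?Rabs_pos_eq; try lra.
      destruct (small_agree s si e se si_s w2 c (c,0)) as [E2 _]; simpl; rewrite ?Rabs_R0, ?Rabs_pos_eq; try lra.
      rewrite <- E1, <- E2. apply H.
    + destruct (small_agree s si e se si_s w1 c (0,c)) as [E1 _]; simpl; rewrite ?Rabs_R0, ?Rabs_pos_eq; try lra.
      destruct (small_agree s si e se si_s w2 c (0,c)) as [E2 _]; simpl; rewrite ?Rabs_R0, ?Rabs_pos_eq; try lra.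
      rewrite <- E1, <- E2. apply H.
  - apply (lin_agree w1 w2 1); [lra| |].
    + destruct (int_agree s si sz si_s w1 1 0) as [E1 _]. destruct (int_agree s si sz si_s w2 1 0) as [E2 _].
      simpl in E1, E2. rewrite <- E1, <- E2. apply H.
    + destruct (int_agree s si sz si_s w1 0 1) as [E1 _]. destruct (int_agree s si sz si_s w2 0 1) as [E2 _].
      simpl in E1, E2. rewrite <- E1, <- E2. apply H.
Qed.

Lemma rel_id r : (r = rel1 \/ r = winv rel1 \/ r = rel2 \/ r = winv rel2) -> forall p, Ei r p = p.
Proof.
  intros H [x y]. destruct H as [ -> | [ -> | [ -> | -> ]]]; vm_compute winv;
  unfold Ei, rel1, rel2, U_w, V_w; simpl; unfold h_s, h_s_inv, v_s, v_s_inv, Rid; simpl; f_equal; ring.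
Qed.

Lemma NC_id w : NCword w -> forall p, Ei w p = p.
Proof.
  induction 1 as [|u r w Hr Hw IH]; intro p; [reflexivity|].
  unfold Ei in *. rewrite !E_app, IH. fold Ei. rewrite (rel_id r Hr). unfold Ei. apply E_winv_r.
Qed.

Definition pi s si (f : pt -> pt) : pt -> pt :=
  match excluded_middle_informative (exists w, f = eval_word s si w) with
  | left H => Ei (proj1_sig (constructive_indefinite_description _ H))
  | right _ => f
  end.

Lemma pi_eval s si (si_s : forall x, si (s x) = x)
  (s_fix : (exists e, 0 < e /\ forall x, Rabs x < e -> s x = x)
           \/ (forall z : Z, s (IZR z) = IZR z)) w :
  pi s si (eval_word s si w) = Ei w.
Proof.
  unfold pi. destruct excluded_middle_informative as [H|H]; [|exfalso; apply H; exists w; reflexivity].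
  destruct (constructive_indefinite_description _ H) as [w' Hw']. simpl.
  apply functional_extensionality. intro p. apply (wd s si si_s s_fix). intro q.
  now rewrite <- Hw'.
Qed.

Theorem proposition2 (s si : R -> R)
  (s_cont : continuity s) (si_cont : continuity si)
  (s_si : forall y, s (si y) = y) (si_s : forall x, si (s x) = x)
  (s_incr : forall x y, x < y -> s x < s y)
  (s_odd : forall x, s (- x) = - s x)
  (s_fix : (exists e, 0 < e /\ forall x, Rabs x < e -> s x = x)
           \/ (forall z : Z, s (IZR z) = IZR z)) :
  exists pi : (pt -> pt) -> (pt -> pt),
    (forall f g, Gamma s si f -> Gamma s si g ->
       pi (fun p => f (g p)) = (fun p => pi f (pi g p)))
    /\ (forall g, Gamma Rid Rid g -> exists f, Gamma s si f /\ pi f = g)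
    /\ (forall w : word, pi (eval_word s si w) = eval_word Rid Rid w)
    /\ (forall f, Gamma s si f ->
          (pi f = (fun p => p) <-> NormalClosure s si f)).
Proof.
  pose proof (pi_eval s si si_s s_fix) as PE.
  exists (pi s si). split; [|split; [|split]].
  - intros f g [w1 ->] [w2 ->].
    replace (fun p => eval_word s si w1 (eval_word s si w2 p)) with (eval_word s si (w1 ++ w2))
      by (apply functional_extensionality; intro; apply E_app).
    rewrite !PE. apply functional_extensionality; intro; apply E_app.
  - intros g [w ->]. exists (eval_word s si w). split; [exists w; reflexivity|]. apply PE.
  - exact PE.
  - intros f [w ->]. rewrite PE. split.
    + intro Hid.
      destruct (stepA s si w) as [e [l [Ha [k [Hk Ek]]]]].
      assert (Hn : forall p, Ei (nf e l) p = p).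
      { intro p. pose proof (wd s si si_s s_fix _ _ Ek p) as W.
        unfold Ei in W at 2. rewrite E_app in W. fold Ei in W. rewrite (NC_id k Hk) in W.
        unfold Ei at 1; rewrite <- W. exact (equal_f Hid p). }
      destruct (stepB e l Ha Hn) as [-> ->].
      exists k. split; auto. apply functional_extensionality; intro p. rewrite Ek.
      simpl. rewrite app_nil_r. reflexivity.
    + intros [w0 [H0 E0]].
      rewrite <- (PE w), E0, PE.
      apply functional_extensionality. apply NC_id; auto.
Qed.
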